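(* Let $A\subseteq X$ and $B\subseteq Y$ be Frölicher subspaces with inclusions $i:A\hookrightarrow X$, $j:B\hookrightarrow Y$. If $(X,A)$ and $(Y,B)$ are SNDR pairs, then $(X\times Y,(X\times B)\cup(A\times Y))$ is an SNDR pair. If, in addition, one of $(X,A)$ or $(Y,B)$ is an SDR pair, then $(X\times Y,(X\times B)\cup(A\times Y))$ is an SDR pair.
   Context: A Frölicher space is a triple $(X,\mathcal C_X,\mathcal F_X)$ with $\mathcal C_X\subseteq X^{\mathbb R}$, $\mathcal F_X\subseteq\mathbb R^X$, such that $\mathcal F_X=\{f\mid f\circ c\in C^\infty(\mathbb R,\mathbb R)\ \forall c\in\mathcal C_X\}$ and $\mathcal C_X=\{c\mid f\circ c\in C^\infty(\mathbb R,\mathbb R)\ \forall f\in\mathcal F_X\}$. A map $\varphi:X\to Y$ is smooth if $g\circ\varphi\in\mathcal F_X$ for all $g\in\mathcal F_Y$. Subspaces carry the initial structure (generated by restrictions of structure functions); products the structure generated by $f\circ\pi_i$; $(X\times B)\cup(A\times Y)$ is a subspace of $X\times Y$. $I$ is $[0,1]$ with the subspace structure from $\mathbb R$ ($\mathcal F_I$ its structure functions). $\mathbf I$ is $[0,1]$ with the structure generated by those $f\in\mathcal F_I$ for which some $0<\epsilon<1/4$ has $f$ constant on $[0,\epsilon)$ and on $(1-\epsilon,1]$. FCIP: Let $i:A\to X$ be smooth. For a structure curve $x:\mathbb R\to X$ let $\Lambda(x,i)$ be the set of $s_*\in x^{-1}(i(A))$ that are limits of sequences $s_n\in x^{-1}(X\setminus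 i(A))$. A structure function $f$ on $\mathbf I\times X$ has the FCIP with respect to $i$ if $f\circ c$ is $C^\infty$ for every map $c=(t,x):\mathbb R\to[0,1]\times X$ such that $x$ is a structure curve of $X$ and, for every $\epsilon>0$, $t$ is $C^\infty$ on every open interval disjoint from $\bigcup_{s_*\in\Lambda(x,i)}[s_*-\epsilon,s_*+\epsilon]$. A map $g:\mathbf I\times X\to Y$ has the FCIP w.r.t. $i$ if $h\circ g$ does for every $h\in\mathcal F_Y$. SNDR/SDR pair: for a smooth inclusion $i:A\hookrightarrow X$, $(X,A)$ is an SNDR pair if there are a smooth $u:X\to\mathbf I$ with $u^{-1}(0)=i(A)$ and a smooth $H:\mathbf I\times X\to X$ having the FCIP w.r.t. $i$, with $H(0,x)=x$ for all $x$, $H(t,a)=a$ for all $t$ and $a\in i(A)$, and $H(1,x)\in i(A)$ whenever $u(x)<1$; it is an SDR pair if moreover $H(1,x)\in i(A)$ for all $x\in X$. *)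

(* Defs.v *)
From Stdlib Require Import Reals.
Open Scope R_scope.

Definition smoothRR (g : R -> R) : Prop :=
  exists D : nat -> R -> R, D 0%nat = g /\
    forall (n : nat) (x : R), derivable_pt_lim (D n) x (D (S n) x).

Definition smooth_on (a b : R) (g : R -> R) : Prop :=
  exists D : nat -> R -> R, (forall x, a < x < b -> D 0%nat x = g x) /\
    forall (n : nat) (x : R), a < x < b -> derivable_pt_lim (D n) x (D (S n) x).

Record Frol := mkFrol {
  carrier :> Type;
  curves : (R -> carrier) -> Prop;
  funs : (carrier -> R) -> Prop;
  funs_spec : forall f, funs f <-> (forall c, curves c -> smoothRR (fun s => f (c s)));
  curves_spec : forall c, curves c <-> (forall f, funs f -> smoothRR (fun s => f (c s)))
}.

Definition gen_curves {S : Type} (F0 : (S -> R) -> Prop) (c : R -> S) : Prop :=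
  forall f, F0 f -> smoothRR (fun s => f (c s)).
Definition gen_funs {S : Type} (F0 : (S -> R) -> Prop) (f : S -> R) : Prop :=
  forall c, gen_curves F0 c -> smoothRR (fun s => f (c s)).

Lemma gen_funs_spec {S : Type} (F0 : (S -> R) -> Prop) :
  forall f, gen_funs F0 f <-> (forall c, gen_curves F0 c -> smoothRR (fun s => f (c s))).
Proof. intros f; split; intros H; exact H. Qed.

Lemma gen_curves_spec {S : Type} (F0 : (S -> R) -> Prop) :
  forall c, gen_curves F0 c <-> (forall f, gen_funs F0 f -> smoothRR (fun s => f (c s))).
Proof.
  intros c; split.
  - intros Hc f Hf. apply Hf. exact Hc.
  - intros H f0 Hf0. apply H. intros c' Hc'. apply Hc'. exact Hf0.
Qed.

Definition generated (S : Type) (F0 : (S -> R) -> Prop) : Frol :=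
  mkFrol S (gen_curves F0) (gen_funs F0) (gen_funs_spec F0) (gen_curves_spec F0).

(** Subspace: initial structure, generated by restrictions of structure functions. *)
Definition subspace (X : Frol) (P : X -> Prop) : Frol :=
  generated {x : X | P x}
    (fun g => exists f, funs X f /\ g = (fun y => f (proj1_sig y))).

Definition prodF (X Y : Frol) : Frol :=
  generated (X * Y)%type
    (fun g => (exists f, funs X f /\ g = (fun p => f (fst p))) \/
              (exists f, funs Y f /\ g = (fun p => f (snd p)))).

Definition smooth_map (X Y : Frol) (phi : X -> Y) : Prop :=
  forall g, funs Y g -> funs X (fun x => g (phi x)).

(** The real line (structure generated by the identity: curves = C^oo curves). *)
Definition Rline : Frol := generated R (fun g => g = (fun x => x)).

Definition Ityp : Type := {t : R | 0 <= t <= 1}.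

Definition Iunit : Frol := subspace Rline (fun t => 0 <= t <= 1).

Definition BoldI : Frol :=
  generated Ityp
    (fun f : Ityp -> R => funs Iunit f /\
       exists eps, 0 < eps < 1/4 /\
         (forall s t : Ityp, proj1_sig s < eps -> proj1_sig t < eps -> f s = f t) /\
         (forall s t : Ityp, 1 - eps < proj1_sig s -> 1 - eps < proj1_sig t -> f s = f t)).

Definition Lambda (X : Frol) (P : X -> Prop) (x : R -> X) (s : R) : Prop :=
  P (x s) /\ exists sn : nat -> R, (forall n, ~ P (x (sn n))) /\ Un_cv sn s.

Definition FCIP_fun (X : Frol) (P : X -> Prop) (f : prodF BoldI X -> R) : Prop :=
  forall (t : R -> Ityp) (x : R -> X),
    curves X x ->
    (forall eps, eps > 0 -> forall a b, a < b ->
       (forall r, a < r < b -> forall s, Lambda X P x s -> ~ (s - eps <= r <= s + eps)) ->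
       smooth_on a b (fun r => proj1_sig (t r))) ->
    smoothRR (fun r => f (t r, x r)).

Definition FCIP_map (X : Frol) (P : X -> Prop) (Y : Frol) (g : prodF BoldI X -> Y) : Prop :=
  forall h, funs Y h -> FCIP_fun X P (fun p => h (g p)).

Definition SNDR_data (X : Frol) (P : X -> Prop) (u : X -> BoldI) (H : prodF BoldI X -> X) : Prop :=
  smooth_map X BoldI u /\
  (forall x, proj1_sig (u x) = 0 <-> P x) /\
  smooth_map (prodF BoldI X) X H /\
  FCIP_map X P X H /\
  (forall (t : Ityp) x, proj1_sig t = 0 -> H (t, x) = x) /\
  (forall (t : Ityp) a, P a -> H (t, a) = a) /\
  (forall (t : Ityp) x, proj1_sig t = 1 -> proj1_sig (u x) < 1 -> P (H (t, x))).

Definition SNDR (X : Frol) (P : X -> Prop) : Prop :=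
  exists u H, SNDR_data X P u H.

Definition SDR (X : Frol) (P : X -> Prop) : Prop :=
  exists u H, SNDR_data X P u H /\
    (forall (t : Ityp) x, proj1_sig t = 1 -> P (H (t, x))).

(* Main.v *)
Require Import Defs.
From Stdlib Require Import Reals.
From Stdlib Require Import Lra Lia ClassicalEpsilon FunctionalExtensionality Classical.
Open Scope R_scope.

Definition isOpen (Om : R -> Prop) := forall x, Om x -> exists d, 0 < d /\ forall y, Rabs (y - x) < d -> Om y.
Definition ball (x d : R) : R -> Prop := fun y => Rabs (y - x) < d.
Definition allR : R -> Prop := fun _ => True.

Lemma ball_open x d : isOpen (ball x d).
Proof.
  intros y Hy. unfold ball in *. exists (d - Rabs (y - x)). split. lra.
  intros z Hz. replace (z - x) with ((z - y) + (y - x)) by ring.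
  pose proof (Rabs_triang (z - y) (y - x)). lra.
Qed.

Lemma allR_open : isOpen allR.
Proof. intros x _. exists 1. split. lra. intros; exact I. Qed.

Lemma interval_open a b : isOpen (fun x => a < x < b).
Proof.
  intros x Hx. exists (Rmin (x - a) (b - x)). split.
  apply Rmin_glb_lt; lra.
  intros y Hy. pose proof (Rmin_l (x - a) (b - x)). pose proof (Rmin_r (x - a) (b - x)).
  apply Rabs_def2 in Hy. lra.
Qed.

Lemma deriv_loc f g x l :
  (exists d, 0 < d /\ forall y, Rabs (y - x) < d -> f y = g y) ->
  derivable_pt_lim f x l -> derivable_pt_lim g x l.
Proof.
  intros [d [Hd Hfg]] H eps Heps. destruct (H eps Heps) as [del Hdel].
  assert (Hm : 0 < Rmin del d) by (apply Rmin_glb_lt; [apply cond_pos| lra]).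
  exists (mkposreal _ Hm). intros h Hh0 Hh. simpl in Hh.
  rewrite <- (Hfg (x + h)), <- (Hfg x).
  - apply Hdel; auto. pose proof (Rmin_l del d). lra.
  - replace (x - x) with 0 by ring. rewrite Rabs_R0. lra.
  - replace (x + h - x) with h by ring. pose proof (Rmin_r del d). lra.
Qed.

Fixpoint Cn (Om : R -> Prop) (n : nat) (f : R -> R) : Prop :=
  match n with
  | O => True
  | S n => exists f', (forall x, Om x -> derivable_pt_lim f x (f' x)) /\ Cn Om n f'
  end.

Definition sm (Om : R -> Prop) (f : R -> R) : Prop := forall n, Cn Om n f.

Lemma Cn_mono Om n f : Cn Om (S n) f -> Cn Om n f.
Proof.
  revert f. induction n; intros f H. exact I.
  destruct H as [f' [Hd Hc]]. exists f'. split; auto.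
Qed.

Lemma Cn_ext Om n f g : isOpen Om -> (forall x, Om x -> f x = g x) -> Cn Om n f -> Cn Om n g.
Proof.
  intros Ho. revert f g. induction n; intros f g He H. exact I.
  destruct H as [f' [Hd Hc]]. exists f'. split; auto.
  intros x Hx. apply deriv_loc with f. destruct (Ho x Hx) as [d [Hd' Hb]].
  exists d; split; auto. auto.
Qed.

Lemma sm_ext Om f g : isOpen Om -> (forall x, Om x -> f x = g x) -> sm Om f -> sm Om g.
Proof. intros Ho He H n. apply Cn_ext with f; auto. Qed.

Lemma Cn_sub Om Om' n f : (forall x, Om' x -> Om x) -> Cn Om n f -> Cn Om' n f.
Proof.
  intros Hs. revert f. induction n; intros f H. exact I.
  destruct H as [f' [Hd Hc]]. exists f'. split; auto.
Qed.

Lemma sm_sub Om Om' f : (forall x, Om' x -> Om x) -> sm Om f -> sm Om' f.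
Proof. intros Hs H n. apply Cn_sub with Om; auto. Qed.

Lemma Cn_const Om n c : Cn Om n (fun _ => c).
Proof.
  revert c. induction n; intros c. exact I. exists (fun _ => 0). split; auto.
  intros x _. apply derivable_pt_lim_const.
Qed.

Lemma sm_const Om c : sm Om (fun _ => c).
Proof. intro n; apply Cn_const. Qed.

Lemma Cn_id Om n : Cn Om n (fun x => x).
Proof.
  destruct n. exact I. exists (fun _ => 1). split.
  intros x _. apply derivable_pt_lim_id. apply Cn_const.
Qed.

Lemma sm_id Om : sm Om (fun x => x).
Proof. intro n; apply Cn_id. Qed.

Lemma Cn_plus Om n f g : Cn Om n f -> Cn Om n g -> Cn Om n (fun x => f x + g x).
Proof.
  revert f g. induction n; intros f g Hf Hg. exact I.
  destruct Hf as [f' [Hfd Hfc]]. destruct Hg as [g' [Hgd Hgc]].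
  exists (fun x => f' x + g' x). split; auto.
  intros x Hx. apply (derivable_pt_lim_plus f g x); auto.
Qed.

Lemma Cn_mult Om n f g : Cn Om n f -> Cn Om n g -> Cn Om n (fun x => f x * g x).
Proof.
  revert f g. induction n; intros f g Hf Hg. exact I.
  pose proof (Cn_mono _ _ _ Hf) as Hf0. pose proof (Cn_mono _ _ _ Hg) as Hg0.
  destruct Hf as [f' [Hfd Hfc]]. destruct Hg as [g' [Hgd Hgc]].
  exists (fun x => f' x * g x + f x * g' x). split.
  intros x Hx. apply (derivable_pt_lim_mult f g x); auto.
  apply Cn_plus; apply IHn; auto.
Qed.

Lemma sm_plus Om f g : sm Om f -> sm Om g -> sm Om (fun x => f x + g x).
Proof. intros Hf Hg n; apply Cn_plus; auto. Qed.
Lemma sm_mult Om f g : sm Om f -> sm Om g -> sm Om (fun x => f x * g x).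
Proof. intros Hf Hg n; apply Cn_mult; auto. Qed.

Definition Der (f : R -> R) (x : R) : R :=
  match excluded_middle_informative (exists l, derivable_pt_lim f x l) with
  | left H => proj1_sig (constructive_indefinite_description _ H)
  | right _ => 0
  end.

Lemma Der_spec f x l : derivable_pt_lim f x l -> Der f x = l.
Proof.
  intros H. unfold Der. destruct excluded_middle_informative as [e|n].
  - destruct constructive_indefinite_description as [l' Hl']. simpl.
    eapply uniqueness_limite; eauto.
  - exfalso; apply n; eauto.
Qed.

Lemma sm_der Om f : isOpen Om -> sm Om f ->
  (forall x, Om x -> derivable_pt_lim f x (Der f x)) /\ sm Om (Der f).
Proof.
  intros Ho H. split.
  - intros x Hx. destruct (H 1%nat) as [f' [Hd _]].
    rewrite (Der_spec f x (f' x)); auto.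
  - intro n. destruct (H (S n)) as [f' [Hd Hc]].
    apply Cn_ext with f'; auto. intros x Hx. symmetry; apply Der_spec; auto.
Qed.

Lemma sm_allR_der f : sm allR f -> forall x, derivable_pt_lim f x (Der f x).
Proof. intros H x. apply (proj1 (sm_der allR f allR_open H)). exact I. Qed.

Lemma Cn_comp Om n G f : sm allR G -> Cn Om n f -> Cn Om n (fun x => G (f x)).
Proof.
  revert G f. induction n; intros G f HG Hf. exact I.
  pose proof (Cn_mono _ _ _ Hf) as Hf0.
  destruct Hf as [f' [Hfd Hfc]].
  destruct (sm_der allR G allR_open HG) as [HGd HGs].
  exists (fun x => Der G (f x) * f' x). split.
  - intros x Hx. pose proof (derivable_pt_lim_comp f G x (f' x) (Der G (f x)) (Hfd x Hx) (HGd (f x) I)).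
    unfold comp in H. exact H.
  - apply Cn_mult; auto.
Qed.

Lemma sm_comp Om G f : sm allR G -> sm Om f -> sm Om (fun x => G (f x)).
Proof. intros HG Hf n; apply Cn_comp; auto. Qed.

Lemma Cn_inv Om n f : (forall x, Om x -> f x <> 0) -> Cn Om n f -> Cn Om n (fun x => / f x).
Proof.
  intros Hnz. revert f Hnz. induction n; intros f Hnz Hf. exact I.
  pose proof (Cn_mono _ _ _ Hf) as Hf0.
  destruct Hf as [f' [Hfd Hfc]].
  exists (fun x => (-1) * f' x * (/ f x * / f x)). split.
  - intros x Hx. pose proof (derivable_pt_lim_div (fun _ => 1) f x 0 (f' x) (derivable_pt_lim_const 1 x) (Hfd x Hx) (Hnz x Hx)).
    unfold div_fct in H.
    replace ((-1) * f' x * (/ f x * / f x)) with ((0 * f x - f' x * 1) / (f x)²).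
    replace (fun x => / f x) with (fun x => 1 / f x). exact H.
    apply functional_extensionality; intro; unfold Rdiv; ring.
    unfold Rsqr. field. auto.
  - apply Cn_mult. apply Cn_mult. apply Cn_const. auto.
    apply Cn_mult; apply IHn; auto.
Qed.

Lemma sm_inv Om f : (forall x, Om x -> f x <> 0) -> sm Om f -> sm Om (fun x => / f x).
Proof. intros Hnz Hf n; apply Cn_inv; auto. Qed.

Fixpoint itD (n : nat) (f : R -> R) : R -> R :=
  match n with O => f | S n => itD n (Der f) end.

Lemma sm_tower Om f : isOpen Om -> sm Om f ->
  forall n x, Om x -> derivable_pt_lim (itD n f) x (itD (S n) f x).
Proof.
  intros Ho Hf n. revert f Hf. induction n; intros f Hf x Hx.
  - simpl. apply (proj1 (sm_der Om f Ho Hf)); auto.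
  - change (derivable_pt_lim (itD n (Der f)) x (itD (S n) (Der f) x)).
    apply IHn; auto. apply (proj2 (sm_der Om f Ho Hf)).
Qed.

Lemma tower_Cn Om (D : nat -> R -> R) :
  (forall n x, Om x -> derivable_pt_lim (D n) x (D (S n) x)) -> forall m k, Cn Om m (D k).
Proof.
  intros HD m. induction m; intros k. exact I.
  exists (D (S k)). split; auto.
Qed.

Lemma smoothRR_sm f : smoothRR f <-> sm allR f.
Proof.
  split.
  - intros [D [H0 HD]] n. subst f. apply tower_Cn. intros; auto.
  - intros H. exists (fun n => itD n f). split. reflexivity.
    intros n x. apply (sm_tower allR f allR_open H n x I).
Qed.

Lemma smooth_on_sm a b f : smooth_on a b f <-> sm (fun x => a < x < b) f.
Proof.
  split.
  - intros [D [H0 HD]] n. apply Cn_ext with (D O). apply interval_open. auto.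
    apply tower_Cn. auto.
  - intros H. exists (fun n => itD n f). split. reflexivity.
    intros n x Hx. apply (sm_tower _ f (interval_open a b) H n x Hx).
Qed.

Lemma loc_sm Om f : isOpen Om ->
  (forall x, Om x -> exists d, 0 < d /\ sm (ball x d) f) -> sm Om f.
Proof.
  intros Ho H n. revert f H. induction n; intros f H. exact I.
  exists (Der f). split.
  - intros x Hx. destruct (H x Hx) as [d [Hd Hs]].
    apply (proj1 (sm_der _ f (ball_open x d) Hs)). unfold ball. rewrite Rminus_diag, Rabs_R0. auto.
  - apply IHn. intros x Hx. destruct (H x Hx) as [d [Hd Hs]]. exists d. split; auto.
    apply (proj2 (sm_der _ f (ball_open x d) Hs)).
Qed.

Definition cont (f : R -> R) (x : R) := forall eps, 0 < eps -> exists d, 0 < d /\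
  forall y, Rabs (y - x) < d -> Rabs (f y - f x) < eps.

Lemma cont_of_pt f x : continuity_pt f x -> cont f x.
Proof.
  intros H eps Heps. destruct (H eps Heps) as [alp [Ha Hb]]. exists alp. split; auto.
  intros y Hy. destruct (Req_dec_T y x) as [e|n].
  - subst. rewrite Rminus_diag, Rabs_R0; auto.
  - apply (Hb y). split. split. exact I. auto. exact Hy.
Qed.

Lemma pt_of_cont f x : cont f x -> continuity_pt f x.
Proof.
  intros H eps Heps. destruct (H eps Heps) as [d [Hd Hb]]. exists d. split; auto.
  intros y [_ Hy]. apply Hb. exact Hy.
Qed.

Lemma deriv_cont f x l : derivable_pt_lim f x l -> cont f x.
Proof.
  intros H. apply cont_of_pt. apply derivable_continuous_pt. exists l. exact H.
Qed.

Lemma sm_cont Om f x : isOpen Om -> sm Om f -> Om x -> cont f x.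
Proof.
  intros Ho Hf Hx. apply deriv_cont with (Der f x). apply (proj1 (sm_der Om f Ho Hf)); auto.
Qed.

Lemma cont_comp f g x : cont f x -> cont g (f x) -> cont (fun y => g (f y)) x.
Proof.
  intros Hf Hg. apply cont_of_pt. apply (continuity_pt_comp f g x); apply pt_of_cont; auto.
Qed.

Lemma cont_mult f g x : cont f x -> cont g x -> cont (fun y => f y * g y) x.
Proof.
  intros Hf Hg. apply cont_of_pt. apply (continuity_pt_mult f g x); apply pt_of_cont; auto.
Qed.

Definition psi (k : nat) (x : R) : R :=
  if Rle_dec x 0 then 0 else (/ x) ^ k * exp (- / x).

Lemma psi_neg k x : x <= 0 -> psi k x = 0.
Proof. intros H; unfold psi; destruct Rle_dec; lra. Qed.

Lemma psi_pos k x : 0 < x -> psi k x = (/ x) ^ k * exp (- / x).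
Proof. intros H; unfold psi; destruct Rle_dec; [lra|auto]. Qed.

Lemma d_inv x : x <> 0 -> derivable_pt_lim (fun y => / y) x (- ((/ x) ^ 2)).
Proof.
  intros Hx. pose proof (derivable_pt_lim_div (fun _ => 1) id x 0 1 (derivable_pt_lim_const 1 x) (derivable_pt_lim_id x) Hx) as H.
  unfold div_fct, id in H.
  replace (fun y => / y) with (fun y => 1 / y). replace (- ((/ x) ^ 2)) with ((0 * x - 1 * 1) / x²). exact H.
  unfold Rsqr; field; auto.
  apply functional_extensionality; intro; unfold Rdiv; ring.
Qed.

Lemma exp_mult_nat (m : nat) z : exp (INR m * z) = exp z ^ m.
Proof.
  induction m. simpl. replace (0 * z) with 0 by ring. apply exp_0.
  rewrite S_INR. replace ((INR m + 1) * z) with (INR m * z + z) by ring.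
  rewrite exp_plus, IHm. simpl. ring.
Qed.

Lemma exp_ge_pow y (m : nat) : 0 < y -> (0 < m)%nat -> (y / INR m) ^ m <= exp y.
Proof.
  intros Hy Hm. assert (HmR : 0 < INR m) by (apply lt_0_INR; auto).
  replace y with (INR m * (y / INR m)) at 2 by (field; lra).
  rewrite exp_mult_nat. apply pow_incr. split.
  - apply Rlt_le. apply Rdiv_lt_0_compat; auto.
  - assert (y / INR m <> 0). { apply Rgt_not_eq. apply Rdiv_lt_0_compat; auto. }
    pose proof (exp_ineq1 _ H). lra.
Qed.

Lemma psi_bound k h : 0 < h ->
  (/ h) ^ S k * exp (- / h) <= INR (S (S k)) ^ (S (S k)) * h.
Proof.
  intros Hh. set (y := / h). assert (Hy : 0 < y) by (apply Rinv_0_lt_compat; auto).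
  set (m := S (S k)). assert (HmR : 0 < INR m) by (apply lt_0_INR; unfold m; lia).
  pose proof (exp_ge_pow y m Hy ltac:(unfold m; lia)) as He.
  assert (Hh' : h = / y) by (unfold y; rewrite Rinv_inv; auto). rewrite Hh'.
  rewrite exp_Ropp.
  assert (HE : 0 < exp y) by apply exp_pos.
  unfold Rdiv in He. rewrite Rpow_mult_distr in He.
  assert (Hmm : 0 < INR m ^ m) by (apply pow_lt; auto).
  assert (Hinv : (/ INR m) ^ m = / (INR m ^ m)) by (apply pow_inv).
  rewrite Hinv in He.
  (* y^m / M <= E  ->  y^(k+1) / E <= M / y *)
  assert (Hym : y ^ m = y ^ S k * y) by (unfold m; simpl; ring).
  assert (Hyk : 0 < y ^ S k) by (apply pow_lt; auto).
  apply Rmult_le_reg_r with (exp y * y). nra.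
  replace (y ^ S k * / exp y * (exp y * y)) with (y ^ S k * y) by (field; lra).
  replace (INR m ^ m * / y * (exp y * y)) with (INR m ^ m * exp y) by (field; lra).
  rewrite <- Hym.
  apply Rmult_le_reg_r with (/ INR m ^ m). apply Rinv_0_lt_compat; auto.
  replace (INR m ^ m * exp y * / INR m ^ m) with (exp y) by (field; lra). lra.
Qed.

Lemma psi_deriv k x : derivable_pt_lim (psi k) x (- INR k * psi (S k) x + psi (S (S k)) x).
Proof.
  destruct (Rtotal_order x 0) as [Hx|[Hx|Hx]].
  - rewrite !psi_neg by lra. replace (- INR k * 0 + 0) with 0 by ring.
    apply deriv_loc with (fun _ => 0).
    exists (- x). split. lra. intros y Hy. apply Rabs_def2 in Hy. rewrite psi_neg by lra. auto.
    apply derivable_pt_lim_const.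
  - subst x. rewrite !psi_neg by lra. replace (- INR k * 0 + 0) with 0 by ring.
    intros eps Heps. set (M := INR (S (S k)) ^ (S (S k))).
    assert (HM : 0 < M) by (apply pow_lt; apply lt_0_INR; lia).
    assert (Hd : 0 < eps / M) by (apply Rdiv_lt_0_compat; auto).
    exists (mkposreal _ Hd). intros h Hh0 Hh. simpl in Hh.
    rewrite Rplus_0_l, (psi_neg k 0) by lra. rewrite Rminus_0_r, Rminus_0_r.
    destruct (Rle_dec h 0) as [Hn|Hp].
    + rewrite psi_neg by auto. unfold Rdiv. rewrite Rmult_0_l, Rabs_R0. auto.
    + assert (Hp' : 0 < h) by lra. rewrite psi_pos by auto.
      replace ((/ h) ^ k * exp (- / h) / h) with ((/ h) ^ S k * exp (- / h)) by (simpl; field; lra).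
      assert (H0 : 0 < (/ h) ^ S k * exp (- / h)).
      { apply Rmult_lt_0_compat. apply pow_lt. apply Rinv_0_lt_compat; auto. apply exp_pos. }
      rewrite Rabs_right by lra. pose proof (psi_bound k h Hp') as Hb. fold M in Hb.
      apply Rabs_def2 in Hh. destruct Hh as [Hh1 Hh2].
      apply Rle_lt_trans with (M * h); auto.
      apply Rmult_lt_reg_r with (/ M). apply Rinv_0_lt_compat; auto.
      replace (M * h * / M) with h by (field; lra). unfold Rdiv in Hh1. lra.
  - rewrite !psi_pos by auto.
    apply deriv_loc with (fun y => (/ y) ^ k * exp (- / y)).
    + exists x. split. auto. intros y Hy. apply Rabs_def2 in Hy. rewrite psi_pos by lra. auto.
    + assert (Hx0 : x <> 0) by lra.
      pose proof (derivable_pt_lim_comp (fun y => / y) (fun z => z ^ k) x _ _ (d_inv x Hx0) (derivable_pt_lim_pow (/ x) k)) as H1.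
      pose proof (derivable_pt_lim_opp _ _ _ (d_inv x Hx0)) as H2.
      pose proof (derivable_pt_lim_comp (opp_fct (fun y => / y)) exp x _ _ H2 (derivable_pt_lim_exp _)) as H3.
      pose proof (derivable_pt_lim_mult _ _ x _ _ H1 H3) as H4.
      unfold comp, mult_fct, opp_fct in H4.
      match goal with |- derivable_pt_lim _ _ ?l => replace l with
        (INR k * (/ x) ^ Init.Nat.pred k * - (/ x) ^ 2 * exp (- / x) +
         (/ x) ^ k * (exp (- / x) * - - (/ x) ^ 2)) end.
      exact H4.
      destruct k. simpl. ring. simpl. ring.
Qed.

Lemma psi_sm k : sm allR (psi k).
Proof.
  intro n. revert k. induction n; intros k. exact I.
  exists (fun x => - INR k * psi (S k) x + psi (S (S k)) x). split.
  intros x _. apply psi_deriv.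
  apply Cn_plus. apply Cn_mult. apply Cn_const. apply IHn. apply IHn.
Qed.

Definition phi := psi 0.
Lemma phi_pos x : 0 < x -> 0 < phi x.
Proof. intros; unfold phi; rewrite psi_pos by auto. simpl. rewrite Rmult_1_l. apply exp_pos. Qed.
Lemma phi_neg x : x <= 0 -> phi x = 0.
Proof. intros; unfold phi; apply psi_neg; auto. Qed.
Lemma phi_ge x : 0 <= phi x.
Proof. destruct (Rle_dec x 0). rewrite phi_neg; lra. apply Rlt_le, phi_pos; lra. Qed.

Definition St (x : R) : R := phi x * / (phi x + phi (1 - x)).

Lemma St_den x : 0 < phi x + phi (1 - x).
Proof.
  destruct (Rle_dec x 0). pose proof (phi_pos (1 - x)). pose proof (phi_ge x). lra.
  pose proof (phi_pos x). pose proof (phi_ge (1 - x)). lra.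
Qed.

Lemma sm_lin Om a b : sm Om (fun x => a * x + b).
Proof. apply sm_plus. apply sm_mult. apply sm_const. apply sm_id. apply sm_const. Qed.

Lemma St_sm : sm allR St.
Proof.
  unfold St. apply sm_mult. apply psi_sm. apply sm_inv.
  intros x _. pose proof (St_den x). lra.
  apply sm_plus. apply psi_sm.
  apply sm_ext with (fun x => phi ((-1) * x + 1)). apply allR_open.
  intros x _. f_equal; ring.
  apply sm_comp. apply psi_sm. apply sm_lin.
Qed.

Lemma St_0 x : x <= 0 -> St x = 0.
Proof. intros; unfold St; rewrite phi_neg by auto; ring. Qed.
Lemma St_1 x : 1 <= x -> St x = 1.
Proof. intros; unfold St. rewrite (phi_neg (1 - x)) by lra. rewrite Rplus_0_r.
  pose proof (phi_pos x); field; lra. Qed.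
Lemma St_pos x : 0 < x -> 0 < St x.
Proof. intros; unfold St. pose proof (St_den x). pose proof (phi_pos x).
  apply Rmult_lt_0_compat; auto. apply Rinv_0_lt_compat; auto. Qed.
Lemma St_lt1 x : x < 1 -> St x < 1.
Proof. intros; unfold St. pose proof (St_den x). pose proof (phi_pos (1 - x) ltac:(lra)).
  pose proof (phi_ge x).
  apply Rmult_lt_reg_r with (phi x + phi (1 - x)); auto.
  replace (phi x * / (phi x + phi (1 - x)) * (phi x + phi (1 - x))) with (phi x) by (field; lra). lra. Qed.
Lemma St_range x : 0 <= St x <= 1.
Proof. unfold St. pose proof (St_den x). pose proof (phi_ge x). pose proof (phi_ge (1 - x)).
  split. apply Rmult_le_pos; auto. apply Rlt_le, Rinv_0_lt_compat; auto.
  apply Rmult_le_reg_r with (phi x + phi (1 - x)); auto.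
  replace (phi x * / (phi x + phi (1 - x)) * (phi x + phi (1 - x))) with (phi x) by (field; lra). lra. Qed.
Lemma St_pos_inv x : 0 < St x -> 0 < x.
Proof. intros H. destruct (Rle_dec x 0); auto. rewrite St_0 in H; lra. lra. Qed.
Lemma St_lt1_inv x : St x < 1 -> x < 1.
Proof. intros H. destruct (Rle_dec 1 x); auto. rewrite St_1 in H; lra. lra. Qed.

Lemma Ityp_eq (s t : Ityp) : proj1_sig s = proj1_sig t -> s = t.
Proof.
  destruct s as [s Hs], t as [t Ht]. simpl. intros ->. f_equal. apply proof_irrelevance.
Qed.

Lemma gen_in {S : Type} (F0 : (S -> R) -> Prop) f : F0 f -> gen_funs F0 f.
Proof. intros H c Hc. apply Hc. exact H. Qed.

Lemma Iunit_fun G : smoothRR G -> funs Iunit (fun p : Ityp => G (proj1_sig p)).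
Proof.
  intros HG. change (gen_funs (fun g => exists f, funs Rline f /\ g = (fun y : Ityp => f (proj1_sig y))) (fun p : Ityp => G (proj1_sig p))).
  intros c Hc.
  assert (H1 : smoothRR (fun s => proj1_sig (c s))).
  { apply (Hc (fun y : Ityp => proj1_sig y)). exists (fun x => x). split; auto.
    change (gen_funs (fun g : R -> R => g = (fun x => x)) (fun x => x)).
    intros c' Hc'. apply (Hc' (fun x => x)). reflexivity. }
  apply smoothRR_sm. apply smoothRR_sm in HG. apply smoothRR_sm in H1.
  apply (sm_comp allR G _ HG H1).
Qed.

Lemma Iunit_curve (w : R -> Ityp) : smoothRR (fun r => proj1_sig (w r)) -> curves Iunit w.
Proof.
  intros Hw. change (gen_curves (fun g => exists f, funs Rline f /\ g = (fun y : Ityp => f (proj1_sig y))) w).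
  intros g [f [Hf ->]]. apply Hf. intros g' Hg'. rewrite Hg'. exact Hw.
Qed.

Definition Igen (G : R -> R) : Prop := smoothRR G /\ exists e, 0 < e < 1/4 /\
  (forall z, 0 <= z < e -> G z = G 0) /\ (forall z, 1 - e < z <= 1 -> G z = G 1).

Definition BoldI_F0 : (Ityp -> R) -> Prop := (fun f : Ityp -> R => funs Iunit f /\
       exists eps, 0 < eps < 1/4 /\
         (forall s t : Ityp, proj1_sig s < eps -> proj1_sig t < eps -> f s = f t) /\
         (forall s t : Ityp, 1 - eps < proj1_sig s -> 1 - eps < proj1_sig t -> f s = f t)).

Lemma Igen_F0 G : Igen G -> BoldI_F0 (fun p : Ityp => G (proj1_sig p)).
Proof.
  intros [HG [e [He [H0 H1]]]]. split. apply Iunit_fun; auto.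
  exists e. split; auto. split.
  - intros [s Hs] [t Ht] Hs' Ht'; simpl in *. rewrite (H0 s), (H0 t); auto; lra.
  - intros [s Hs] [t Ht] Hs' Ht'; simpl in *. rewrite (H1 s), (H1 t); auto; lra.
Qed.

Lemma Igen_funs G : Igen G -> funs BoldI (fun p : Ityp => G (proj1_sig p)).
Proof. intros H. apply gen_in. apply Igen_F0; auto. Qed.

Lemma curve_BoldI_G (t : R -> Ityp) G : curves BoldI t -> Igen G ->
  smoothRR (fun r => G (proj1_sig (t r))).
Proof. intros Ht HG. exact (Ht _ (Igen_F0 G HG)). Qed.

Definition Uf {X : Frol} (u : X -> BoldI) (x : X) : R := proj1_sig (u x).

Lemma Uf_range {X : Frol} (u : X -> BoldI) x : 0 <= Uf u x <= 1.
Proof. unfold Uf. destruct (u x); simpl; auto. Qed.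

Lemma map_BoldI_G (X : Frol) (u : X -> BoldI) (c : R -> X) G :
  smooth_map X BoldI u -> curves X c -> Igen G -> smoothRR (fun r => G (Uf u (c r))).
Proof.
  intros Hu Hc HG. pose proof (Hu _ (Igen_funs G HG)) as H.
  apply (proj1 (funs_spec X _) H). auto.
Qed.

Definition Stp (a b z : R) : R := St ((z - a) * / (b - a)).

Lemma Stp_sm a b : smoothRR (Stp a b).
Proof.
  apply smoothRR_sm. unfold Stp.
  apply sm_ext with (fun z => St ((/ (b - a)) * z + (- a * / (b - a)))). apply allR_open.
  intros; f_equal; ring. apply sm_comp. apply St_sm. apply sm_lin.
Qed.

Lemma Stp_0 a b z : a < b -> z <= a -> Stp a b z = 0.
Proof. intros. unfold Stp. apply St_0. assert (0 < / (b - a)) by (apply Rinv_0_lt_compat; lra). nra. Qed.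
Lemma Stp_1 a b z : a < b -> b <= z -> Stp a b z = 1.
Proof. intros. unfold Stp. apply St_1.
  apply Rmult_le_reg_r with (b - a). lra. rewrite Rmult_assoc, Rinv_l by lra. lra. Qed.
Lemma Stp_pos_inv a b z : a < b -> 0 < Stp a b z -> a < z.
Proof. intros H1 H2. destruct (Rle_dec z a); auto. rewrite Stp_0 in H2; auto; lra. lra. Qed.
Lemma Stp_lt1_inv a b z : a < b -> Stp a b z < 1 -> z < b.
Proof. intros H1 H2. destruct (Rle_dec b z); auto. rewrite Stp_1 in H2; auto; lra. lra. Qed.
Lemma Stp_range a b z : 0 <= Stp a b z <= 1.
Proof. apply St_range. Qed.

Lemma Stp_Igen a b : 0 < a -> a < b -> b < 1 -> Igen (Stp a b).
Proof.
  intros. split. apply Stp_sm.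
  exists (Rmin (Rmin a (1 - b)) (1/8)).
  pose proof (Rmin_l (Rmin a (1 - b)) (1/8)). pose proof (Rmin_r (Rmin a (1 - b)) (1/8)).
  pose proof (Rmin_l a (1 - b)). pose proof (Rmin_r a (1 - b)).
  split. split. apply Rmin_glb_lt. apply Rmin_glb_lt; lra. lra. lra.
  split; intros z Hz.
  - rewrite !Stp_0; auto; lra.
  - rewrite !Stp_1; auto; lra.
Qed.

Lemma U_cont (X : Frol) (u : X -> BoldI) (c : R -> X) r0 :
  smooth_map X BoldI u -> curves X c -> cont (fun r => Uf u (c r)) r0.
Proof.
  intros Hu Hc eps Heps. set (w0 := Uf u (c r0)). pose proof (Uf_range u (c r0)) as Hw0. fold w0 in Hw0.
  assert (Hlow : exists d, 0 < d /\ forall r, Rabs (r - r0) < d -> w0 - eps < Uf u (c r)).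
  { destruct (Rle_dec (w0 - eps/2) 0) as [Hle|Hgt].
    - exists 1. split. lra. intros r _. pose proof (Uf_range u (c r)). lra.
    - set (a := w0 - eps/2). set (b := w0 - eps/4).
      assert (HG : Igen (Stp a b)) by (apply Stp_Igen; unfold a, b in *; lra).
      pose proof (map_BoldI_G X u c _ Hu Hc HG) as Hs.
      apply smoothRR_sm in Hs. pose proof (sm_cont allR _ r0 allR_open Hs I (1/2) ltac:(lra)) as [d [Hd Hb]].
      exists d. split; auto. intros r Hr. specialize (Hb r Hr). simpl in Hb.
      fold w0 in Hb. rewrite (Stp_1 a b w0) in Hb by (unfold a, b; lra).
      apply Rabs_def2 in Hb. assert (0 < Stp a b (Uf u (c r))) by lra.
      apply Stp_pos_inv in H; unfold a, b in *; lra. }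
  assert (Hup : exists d, 0 < d /\ forall r, Rabs (r - r0) < d -> Uf u (c r) < w0 + eps).
  { destruct (Rle_dec 1 (w0 + eps/2)) as [Hle|Hgt].
    - exists 1. split. lra. intros r _. pose proof (Uf_range u (c r)). lra.
    - set (a := w0 + eps/4). set (b := w0 + eps/2).
      assert (HG : Igen (Stp a b)) by (apply Stp_Igen; unfold a, b in *; lra).
      pose proof (map_BoldI_G X u c _ Hu Hc HG) as Hs.
      apply smoothRR_sm in Hs. pose proof (sm_cont allR _ r0 allR_open Hs I (1/2) ltac:(lra)) as [d [Hd Hb]].
      exists d. split; auto. intros r Hr. specialize (Hb r Hr). simpl in Hb.
      fold w0 in Hb. rewrite (Stp_0 a b w0) in Hb by (unfold a, b; lra).
      apply Rabs_def2 in Hb. assert (Stp a b (Uf u (c r)) < 1) by lra.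
      apply Stp_lt1_inv in H; unfold a, b in *; lra. }
  destruct Hlow as [d1 [Hd1 H1]]. destruct Hup as [d2 [Hd2 H2]].
  exists (Rmin d1 d2). split. apply Rmin_glb_lt; auto.
  intros r Hr. pose proof (Rmin_l d1 d2). pose proof (Rmin_r d1 d2).
  specialize (H1 r ltac:(lra)). specialize (H2 r ltac:(lra)). fold w0.
  apply Rabs_def1; lra.
Qed.

Definition lam (s : R) : R := St (2 * s).
Definition rho (q : R) : R := St (4 * q - 1).
Definition xi (s : R) : R := St (3 * s - 1).

Lemma lam_sm : sm allR lam.
Proof. unfold lam. apply sm_ext with (fun s => St (2 * s + 0)). apply allR_open.
  intros; f_equal; ring. apply sm_comp. apply St_sm. apply sm_lin. Qed.
Lemma rho_sm : sm allR rho.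
Proof. unfold rho. apply sm_ext with (fun s => St (4 * s + (-1))). apply allR_open.
  intros; f_equal; ring. apply sm_comp. apply St_sm. apply sm_lin. Qed.
Lemma xi_sm : sm allR xi.
Proof. unfold xi. apply sm_ext with (fun s => St (3 * s + (-1))). apply allR_open.
  intros; f_equal; ring. apply sm_comp. apply St_sm. apply sm_lin. Qed.

Lemma xi_Igen : Igen xi.
Proof.
  split. apply smoothRR_sm, xi_sm. exists (1/8). split. lra. unfold xi. split; intros z Hz.
  rewrite !St_0; lra. rewrite !St_1; lra.
Qed.

Lemma K1b (X : Frol) (u : X -> BoldI) (c : R -> X) r0 :
  smooth_map X BoldI u -> curves X c -> 0 < Uf u (c r0) ->
  exists d F, 0 < d /\ smoothRR F /\ (forall r, 0 <= F r <= 1) /\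
    forall r, Rabs (r - r0) < d -> F r = lam (Uf u (c r)).
Proof.
  intros Hu Hc Hw. set (w0 := Uf u (c r0)) in *. pose proof (Uf_range u (c r0)) as Hw0. fold w0 in Hw0.
  set (G := fun z => lam z * Stp (w0/4) (w0/2) z).
  assert (HG : Igen G).
  { split. apply smoothRR_sm. apply sm_mult. apply lam_sm. apply smoothRR_sm, Stp_sm.
    exists (Rmin (w0/4) (1/8)). pose proof (Rmin_l (w0/4) (1/8)). pose proof (Rmin_r (w0/4) (1/8)).
    split. split. apply Rmin_glb_lt; lra. lra. unfold G, lam. split; intros z Hz.
    - rewrite !(Stp_0 (w0/4) (w0/2)); lra.
    - rewrite !(Stp_1 (w0/4) (w0/2)) by lra. rewrite !St_1 by lra. auto. }
  destruct (U_cont X u c r0 Hu Hc (w0/2) ltac:(lra)) as [d [Hd Hb]].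
  exists d, (fun r => G (Uf u (c r))). split; auto. split.
  apply map_BoldI_G; auto. split.
  - intros r. unfold G, lam. pose proof (St_range (2 * Uf u (c r))). pose proof (Stp_range (w0/4) (w0/2) (Uf u (c r))).
    split. apply Rmult_le_pos; lra. nra.
  - intros r Hr. specialize (Hb r Hr). fold w0 in Hb. apply Rabs_def2 in Hb. unfold G.
    rewrite Stp_1 by lra. ring.
Qed.

Lemma prod_curve_fst (X Y : Frol) (c : R -> prodF X Y) : curves (prodF X Y) c -> curves X (fun r => fst (c r)).
Proof.
  intros Hc. apply (proj2 (curves_spec X _)). intros f Hf. exact (Hc _ (or_introl (ex_intro _ f (conj Hf eq_refl)))).
Qed.
Lemma prod_curve_snd (X Y : Frol) (c : R -> prodF X Y) : curves (prodF X Y) c -> curves Y (fun r => snd (c r)).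
Proof.
  intros Hc. apply (proj2 (curves_spec Y _)). intros f Hf. exact (Hc _ (or_intror (ex_intro _ f (conj Hf eq_refl)))).
Qed.
Lemma prod_curve_mk (X Y : Frol) (x : R -> X) (y : R -> Y) : curves X x -> curves Y y ->
  curves (prodF X Y) (fun r => (x r, y r)).
Proof.
  intros Hx Hy. change (gen_curves (fun g => (exists f, funs X f /\ g = (fun p : X * Y => f (fst p))) \/
              (exists f, funs Y f /\ g = (fun p : X * Y => f (snd p)))) (fun r => (x r, y r))).
  intros g [[f [Hf ->]]|[f [Hf ->]]]; simpl.
  apply (proj1 (curves_spec X x) Hx f Hf). apply (proj1 (curves_spec Y y) Hy f Hf).
Qed.

Lemma near_P (Z : Frol) (P : Z -> Prop) (x : R -> Z) r0 : P (x r0) -> ~ Lambda Z P x r0 ->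
  exists d, 0 < d /\ forall r, Rabs (r - r0) < d -> P (x r).
Proof.
  intros HP HL. apply NNPP. intros Hn. apply HL. split; auto.
  assert (Hall : forall n : nat, exists r, Rabs (r - r0) < / (INR n + 1) /\ ~ P (x r)).
  { intros n. apply NNPP. intros Hn2. apply Hn. exists (/ (INR n + 1)). split.
    apply Rinv_0_lt_compat. pose proof (pos_INR n). lra.
    intros r Hr. apply NNPP. intros Hr2. apply Hn2. exists r. auto. }
  exists (fun n => proj1_sig (constructive_indefinite_description _ (Hall n))). split.
  - intros n. exact (proj2 (proj2_sig (constructive_indefinite_description _ (Hall n)))).
  - intros eps Heps. destruct (INR_unbounded (/ eps)) as [N HN]. exists N. intros n HnN.
    pose proof (proj1 (proj2_sig (constructive_indefinite_description _ (Hall n)))) as Hr.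
    set (r := proj1_sig (constructive_indefinite_description _ (Hall n))) in *. unfold Rdist.
    apply Rlt_le_trans with (/ (INR n + 1)); auto.
    assert (INR N <= INR n) by (apply le_INR; exact HnN).
    assert (0 < / eps) by (apply Rinv_0_lt_compat; lra).
    rewrite <- (Rinv_inv eps). apply Rinv_le_contravar. lra. lra.
Qed.

Lemma far_of_const (Z : Frol) (P : Z -> Prop) (c : R -> Z) r0 d : 0 < d ->
  ((forall r, Rabs (r - r0) < d -> P (c r)) \/ (forall r, Rabs (r - r0) < d -> ~ P (c r))) ->
  forall s, Lambda Z P c s -> Rabs (s - r0) > d / 2.
Proof.
  intros Hd [H|H] s [Hs [sn [Hsn Hcv]]].
  - destruct (Rle_dec (Rabs (s - r0)) (d/2)) as [Hle|]; [|lra]. exfalso.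
    destruct (Hcv (d/2) ltac:(lra)) as [N HN]. specialize (HN N (le_n N)). unfold Rdist in HN.
    apply (Hsn N). apply H.
    replace (sn N - r0) with ((sn N - s) + (s - r0)) by ring.
    pose proof (Rabs_triang (sn N - s) (s - r0)). lra.
  - destruct (Rle_dec (Rabs (s - r0)) (d/2)) as [Hle|]; [|lra]. exfalso.
    apply (H s). lra. auto.
Qed.

Lemma far_interval (Z : Frol) (P : Z -> Prop) (c : R -> Z) (t : R -> Ityp) r0 eps :
  (forall eps, eps > 0 -> forall a b, a < b ->
       (forall r, a < r < b -> forall s, Lambda Z P c s -> ~ (s - eps <= r <= s + eps)) ->
       smooth_on a b (fun r => proj1_sig (t r))) ->
  0 < eps -> (forall s, Lambda Z P c s -> Rabs (s - r0) > eps) ->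
  exists d, 0 < d /\ sm (ball r0 d) (fun r => proj1_sig (t r)).
Proof.
  intros Ht He Hf. exists (eps/2). split. lra.
  assert (H := Ht (eps/2) ltac:(lra) (r0 - eps/2) (r0 + eps/2) ltac:(lra)).
  apply (sm_sub (fun x => r0 - eps/2 < x < r0 + eps/2)).
  intros y Hy. unfold ball in Hy. apply Rabs_def2 in Hy. lra.
  apply smooth_on_sm. apply H.
  intros r Hr s Hs Hc. specialize (Hf s Hs).
  unfold Rabs in Hf; destruct Rcase_abs in Hf; lra.
Qed.

Definition R1 {X Y : Frol} (u1 : X -> BoldI) (u2 : Y -> BoldI) (x : X) (y : Y) : R :=
  if Req_dec_T (Uf u1 x) 0 then 1 else rho (lam (Uf u2 y) * / lam (Uf u1 x)).

Lemma R1_range {X Y : Frol} (u1 : X -> BoldI) (u2 : Y -> BoldI) x y : 0 <= R1 u1 u2 x y <= 1.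
Proof. unfold R1. destruct Req_dec_T. lra. apply St_range. Qed.

Lemma alpha_range {X Y : Frol} (u1 : X -> BoldI) (u2 : Y -> BoldI) (t : Ityp) x y :
  0 <= xi (proj1_sig t) * R1 u1 u2 x y <= 1.
Proof.
  pose proof (R1_range u1 u2 x y). pose proof (St_range (3 * proj1_sig t - 1)). unfold xi.
  split. apply Rmult_le_pos; lra. nra.
Qed.

Definition alphaI {X Y : Frol} (u1 : X -> BoldI) (u2 : Y -> BoldI) (t : Ityp) (x : X) (y : Y) : Ityp :=
  exist _ (xi (proj1_sig t) * R1 u1 u2 x y) (alpha_range u1 u2 t x y).

Lemma ball_min r r0 d1 d2 : Rabs (r - r0) < Rmin d1 d2 -> Rabs (r - r0) < d1 /\ Rabs (r - r0) < d2.
Proof. intros H. pose proof (Rmin_l d1 d2). pose proof (Rmin_r d1 d2). lra. Qed.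

Lemma Rmin_pos d1 d2 : 0 < d1 -> 0 < d2 -> 0 < Rmin d1 d2.
Proof. intros; apply Rmin_glb_lt; auto. Qed.

Lemma lam_pos s : 0 < s -> 0 < lam s.
Proof. intros; unfold lam; apply St_pos; lra. Qed.
Lemma lam_0 : lam 0 = 0.
Proof. unfold lam; apply St_0; lra. Qed.
Lemma lam_range s : 0 <= lam s <= 1.
Proof. apply St_range. Qed.

Lemma cont_lam_U (X : Frol) (u : X -> BoldI) (c : R -> X) r0 :
  smooth_map X BoldI u -> curves X c -> cont (fun r => lam (Uf u (c r))) r0.
Proof.
  intros Hu Hc. apply cont_comp with (f := fun r => Uf u (c r)) (g := lam).
  apply U_cont; auto. apply (sm_cont allR); auto. apply allR_open. apply lam_sm. exact I.
Qed.

Lemma ratio_small a b : 0 < b -> 0 <= a -> 4 * a < b -> 4 * (a * / b) - 1 <= 0.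
Proof.
  intros Hb Ha H. assert (a * / b < 1/4).
  { apply Rmult_lt_reg_r with b; auto. rewrite Rmult_assoc, Rinv_l by lra. lra. }
  lra.
Qed.

Lemma alpha_loc (X Y : Frol) (A : X -> Prop) (B : Y -> Prop) (u1 : X -> BoldI) (u2 : Y -> BoldI)
  (x : R -> X) (y : R -> Y) (T : R -> R) (Z : R -> Prop) r0 eps :
  smooth_map X BoldI u1 -> (forall p, Uf u1 p = 0 <-> A p) ->
  smooth_map Y BoldI u2 -> (forall q, Uf u2 q = 0 <-> B q) ->
  curves X x -> curves Y y ->
  (forall r, Z r <-> A (x r) \/ B (y r)) ->
  (forall r1 d, 0 < d -> ((forall r, Rabs (r - r1) < d -> Z r) \/ (forall r, Rabs (r - r1) < d -> ~ Z r)) ->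
     exists d', 0 < d' /\ sm (ball r1 d') (fun r => xi (T r))) ->
  0 < eps -> (forall s, Lambda X A x s -> Rabs (s - r0) > eps) ->
  exists d, 0 < d /\ sm (ball r0 d) (fun r => xi (T r) * R1 u1 u2 (x r) (y r)).
Proof.
  intros Hu1 HA Hu2 HB Hx Hy HZ HT Heps Hfar.
  pose proof (Uf_range u1 (x r0)) as Ha0r. pose proof (Uf_range u2 (y r0)) as Hb0r.
  destruct (Req_dec_T (Uf u1 (x r0)) 0) as [Ha0|Ha0].
  - assert (HAr0 : A (x r0)) by (apply HA; auto).
    assert (HnL : ~ Lambda X A x r0).
    { intros HL. specialize (Hfar r0 HL). rewrite Rminus_diag, Rabs_R0 in Hfar. lra. }
    destruct (near_P X A x r0 HAr0 HnL) as [d1 [Hd1 Hn]].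
    destruct (HT r0 d1 Hd1) as [d' [Hd' Hs]].
    { left. intros r Hr. apply HZ. left. auto. }
    exists (Rmin d1 d'). split. apply Rmin_pos; auto.
    apply sm_ext with (fun r => xi (T r)). apply ball_open.
    intros r Hr. unfold ball in Hr. apply ball_min in Hr. destruct Hr as [Hr1 Hr2].
    unfold R1. destruct Req_dec_T as [e|n]. ring. exfalso; apply n. apply HA. auto.
    apply sm_sub with (ball r0 d'). intros r Hr. unfold ball in *. apply ball_min in Hr. tauto. auto.
  - assert (Ha0p : 0 < Uf u1 (x r0)) by lra.
    set (a0 := Uf u1 (x r0)) in *.
    pose proof (lam_pos a0 Ha0p) as Hla0.
    destruct (U_cont X u1 x r0 Hu1 Hx a0 Ha0p) as [d3 [Hd3 H3]].
    destruct (Req_dec_T (Uf u2 (y r0)) 0) as [Hb0|Hb0].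
    + destruct (cont_lam_U X u1 x r0 Hu1 Hx (lam a0 / 2) ltac:(lra)) as [d1 [Hd1 H1]].
      destruct (cont_lam_U Y u2 y r0 Hu2 Hy (lam a0 / 8) ltac:(lra)) as [d2 [Hd2 H2]].
      exists (Rmin d1 (Rmin d2 d3)). split. apply Rmin_pos; auto. apply Rmin_pos; auto.
      apply sm_ext with (fun _ => 0). apply ball_open.
      intros r Hr. unfold ball in Hr. apply ball_min in Hr. destruct Hr as [Hr1 Hr].
      apply ball_min in Hr. destruct Hr as [Hr2 Hr3].
      specialize (H1 r Hr1). specialize (H2 r Hr2). specialize (H3 r Hr3). simpl in *.
      rewrite Hb0, lam_0 in H2. fold a0 in H1, H3. apply Rabs_def2 in H1. apply Rabs_def2 in H3.
      rewrite Rminus_0_r in H2.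
      pose proof (lam_range (Uf u2 (y r))). rewrite Rabs_right in H2 by lra.
      unfold R1. destruct Req_dec_T as [e|n]. lra.
      unfold rho. rewrite St_0. ring. apply ratio_small; lra.
      apply sm_const.
    + assert (Hb0p : 0 < Uf u2 (y r0)) by lra.
      set (b0 := Uf u2 (y r0)) in *.
      destruct (U_cont Y u2 y r0 Hu2 Hy b0 Hb0p) as [d4 [Hd4 H4]].
      destruct (K1b X u1 x r0 Hu1 Hx Ha0p) as [d1 [F1 [Hd1 [HF1s [HF1r HF1e]]]]].
      destruct (K1b Y u2 y r0 Hu2 Hy Hb0p) as [d2 [F2 [Hd2 [HF2s [HF2r HF2e]]]]].
      destruct (HT r0 (Rmin d3 d4) (Rmin_pos _ _ Hd3 Hd4)) as [d5 [Hd5 H5]].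
      { right. intros r Hr. apply ball_min in Hr. destruct Hr as [Hr3 Hr4].
        specialize (H3 r Hr3). specialize (H4 r Hr4). apply Rabs_def2 in H3. apply Rabs_def2 in H4.
        intros HZr. apply HZ in HZr. destruct HZr as [HAr|HBr].
        apply HA in HAr. fold a0 in H3. lra. apply HB in HBr. fold b0 in H4. lra. }
      apply smoothRR_sm in HF1s. apply smoothRR_sm in HF2s.
      assert (HF1r0 : F1 r0 = lam a0) by (apply HF1e; rewrite Rminus_diag, Rabs_R0; auto).
      destruct (sm_cont allR F1 r0 allR_open HF1s I (lam a0 / 2) ltac:(lra)) as [d6 [Hd6 H6]].
      set (D := Rmin (Rmin d1 d2) (Rmin (Rmin d3 d4) (Rmin d5 d6))).
      assert (HD : 0 < D) by (unfold D; repeat apply Rmin_pos; auto).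
      assert (HDb : forall r, Rabs (r - r0) < D -> Rabs (r - r0) < d1 /\ Rabs (r - r0) < d2 /\
                 Rabs (r - r0) < d3 /\ Rabs (r - r0) < d4 /\ Rabs (r - r0) < d5 /\ Rabs (r - r0) < d6).
      { intros r Hr. unfold D in Hr. apply ball_min in Hr. destruct Hr as [Ha Hb].
        apply ball_min in Ha. apply ball_min in Hb. destruct Hb as [Hb Hc].
        apply ball_min in Hb. apply ball_min in Hc. tauto. }
      exists D. split; auto.
      apply sm_ext with (fun r => xi (T r) * rho (F2 r * / F1 r)). apply ball_open.
      { intros r Hr. unfold ball in Hr. destruct (HDb r Hr) as [Hr1 [Hr2 [Hr3 _]]].
        specialize (H3 r Hr3). apply Rabs_def2 in H3. fold a0 in H3.
        unfold R1. destruct Req_dec_T as [e|n]. lra.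
        rewrite (HF1e r Hr1), (HF2e r Hr2). auto. }
      apply sm_mult.
      * apply sm_sub with (ball r0 d5); auto. intros r Hr; unfold ball in *. apply HDb in Hr; tauto.
      * apply sm_comp. apply rho_sm. apply sm_mult.
        apply sm_sub with allR; auto. intros; exact I.
        apply sm_inv. intros r Hr. unfold ball in Hr. destruct (HDb r Hr) as [_ [_ [_ [_ [_ Hr6]]]]].
        specialize (H6 r Hr6). rewrite HF1r0 in H6. apply Rabs_def2 in H6. lra.
        apply sm_sub with allR; auto. intros; exact I.
Qed.

Lemma alpha_fcip (X Y : Frol) (A : X -> Prop) (B : Y -> Prop) (u1 : X -> BoldI) (u2 : Y -> BoldI)
  (x : R -> X) (y : R -> Y) (t : R -> Ityp) (Z : R -> Prop) :
  smooth_map X BoldI u1 -> (forall p, Uf u1 p = 0 <-> A p) ->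
  smooth_map Y BoldI u2 -> (forall q, Uf u2 q = 0 <-> B q) ->
  curves X x -> curves Y y ->
  (forall r, Z r <-> A (x r) \/ B (y r)) ->
  (forall r1 d, 0 < d -> ((forall r, Rabs (r - r1) < d -> Z r) \/ (forall r, Rabs (r - r1) < d -> ~ Z r)) ->
     exists d', 0 < d' /\ sm (ball r1 d') (fun r => xi (proj1_sig (t r)))) ->
  forall eps, eps > 0 -> forall a b, a < b ->
    (forall r, a < r < b -> forall s, Lambda X A x s -> ~ (s - eps <= r <= s + eps)) ->
    smooth_on a b (fun r => proj1_sig (alphaI u1 u2 (t r) (x r) (y r))).
Proof.
  intros Hu1 HA Hu2 HB Hx Hy HZ HT eps Heps a b Hab Hl.
  apply smooth_on_sm. simpl.
  apply loc_sm. apply interval_open. intros r1 Hr1.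
  apply (alpha_loc X Y A B u1 u2 x y (fun r => proj1_sig (t r)) Z r1 eps); auto.
  intros s Hs. specialize (Hl r1 Hr1 s Hs). unfold Rabs; destruct Rcase_abs; lra.
Qed.

Lemma h_curve (X Y : Frol) (A : X -> Prop) (B : Y -> Prop) (u1 : X -> BoldI) (u2 : Y -> BoldI)
  (h1 : prodF BoldI X -> X)
  (x : R -> X) (y : R -> Y) (t : R -> Ityp) (Z : R -> Prop) :
  FCIP_map X A X h1 ->
  smooth_map X BoldI u1 -> (forall p, Uf u1 p = 0 <-> A p) ->
  smooth_map Y BoldI u2 -> (forall q, Uf u2 q = 0 <-> B q) ->
  curves X x -> curves Y y ->
  (forall r, Z r <-> A (x r) \/ B (y r)) ->
  (forall r1 d, 0 < d -> ((forall r, Rabs (r - r1) < d -> Z r) \/ (forall r, Rabs (r - r1) < d -> ~ Z r)) ->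
     exists d', 0 < d' /\ sm (ball r1 d') (fun r => xi (proj1_sig (t r)))) ->
  curves X (fun r => h1 (alphaI u1 u2 (t r) (x r) (y r), x r)).
Proof.
  intros Hh Hu1 HA Hu2 HB Hx Hy HZ HT. apply (proj2 (curves_spec X _)). intros f Hf.
  apply (Hh f Hf (fun r => alphaI u1 u2 (t r) (x r) (y r)) x Hx).
  apply (alpha_fcip X Y A B u1 u2 x y t Z); auto.
Qed.

Lemma HT_smooth (t : R -> Ityp) (Z : R -> Prop) : curves BoldI t ->
  forall r1 d, 0 < d -> ((forall r, Rabs (r - r1) < d -> Z r) \/ (forall r, Rabs (r - r1) < d -> ~ Z r)) ->
     exists d', 0 < d' /\ sm (ball r1 d') (fun r => xi (proj1_sig (t r))).
Proof.
  intros Ht r1 d Hd _. exists 1. split. lra.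
  apply sm_sub with allR. intros; exact I. apply smoothRR_sm. apply curve_BoldI_G; auto. apply xi_Igen.
Qed.

Lemma HT_fcip (Z : Frol) (P : Z -> Prop) (c : R -> Z) (t : R -> Ityp) :
  (forall eps, eps > 0 -> forall a b, a < b ->
       (forall r, a < r < b -> forall s, Lambda Z P c s -> ~ (s - eps <= r <= s + eps)) ->
       smooth_on a b (fun r => proj1_sig (t r))) ->
  forall r1 d, 0 < d -> ((forall r, Rabs (r - r1) < d -> P (c r)) \/ (forall r, Rabs (r - r1) < d -> ~ P (c r))) ->
     exists d', 0 < d' /\ sm (ball r1 d') (fun r => xi (proj1_sig (t r))).
Proof.
  intros Ht r1 d Hd Hc. pose proof (far_of_const Z P c r1 d Hd Hc) as Hf.
  destruct (far_interval Z P c t r1 (d/2) Ht ltac:(lra) Hf) as [d' [Hd' Hs]].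
  exists d'. split; auto. apply sm_comp. apply xi_sm. auto.
Qed.

Lemma prod01 a b : 0 <= a <= 1 -> 0 <= b <= 1 -> 0 <= a * b <= 1.
Proof. intros. split. apply Rmult_le_pos; lra. nra. Qed.

Definition uprodI {X Y : Frol} (u1 : X -> BoldI) (u2 : Y -> BoldI) (p : prodF X Y) : BoldI :=
  exist _ (lam (Uf u1 (fst p)) * lam (Uf u2 (snd p))) (prod01 _ _ (lam_range _) (lam_range _)).

Lemma uprod_curve (X Y : Frol) (u1 : X -> BoldI) (u2 : Y -> BoldI) (c : R -> prodF X Y) :
  smooth_map X BoldI u1 -> smooth_map Y BoldI u2 -> curves (prodF X Y) c ->
  forall f, BoldI_F0 f -> smoothRR (fun r => f (uprodI u1 u2 (c r))).
Proof.
  intros Hu1 Hu2 Hc f [Hfi [e [He [Hc0 Hc1]]]].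
  pose proof (prod_curve_fst X Y c Hc) as Hx. pose proof (prod_curve_snd X Y c Hc) as Hy.
  apply smoothRR_sm. apply loc_sm. apply allR_open. intros r0 _.
  set (w := fun r => lam (Uf u1 (fst (c r))) * lam (Uf u2 (snd (c r)))).
  assert (Hw : cont w r0).
  { apply cont_mult. apply (cont_lam_U X u1 (fun r => fst (c r))); auto.
    apply (cont_lam_U Y u2 (fun r => snd (c r))); auto. }
  destruct (Rlt_dec (w r0) e) as [Hlt|Hge].
  - destruct (Hw (e - w r0) ltac:(lra)) as [d [Hd Hb]].
    exists d. split; auto. apply sm_ext with (fun _ => f (uprodI u1 u2 (c r0))). apply ball_open.
    intros r Hr. apply Hc0; simpl. fold (w r0). lra.
    specialize (Hb r Hr). apply Rabs_def2 in Hb. fold (w r). lra.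
    apply sm_const.
  - assert (Hw0 : 0 < w r0) by lra.
    pose proof (lam_range (Uf u1 (fst (c r0)))). pose proof (lam_range (Uf u2 (snd (c r0)))).
    pose proof (Uf_range u1 (fst (c r0))). pose proof (Uf_range u2 (snd (c r0))).
    assert (Ha0 : 0 < Uf u1 (fst (c r0))).
    { destruct (Req_dec_T (Uf u1 (fst (c r0))) 0) as [e0|n0]; [|lra].
      unfold w in Hw0. rewrite e0, lam_0 in Hw0. lra. }
    assert (Hb0 : 0 < Uf u2 (snd (c r0))).
    { destruct (Req_dec_T (Uf u2 (snd (c r0))) 0) as [e0|n0]; [|lra].
      unfold w in Hw0. rewrite e0, lam_0 in Hw0. lra. }
    destruct (K1b X u1 (fun r => fst (c r)) r0 Hu1 Hx Ha0) as [d1 [F1 [Hd1 [HF1s [HF1r HF1e]]]]].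
    destruct (K1b Y u2 (fun r => snd (c r)) r0 Hu2 Hy Hb0) as [d2 [F2 [Hd2 [HF2s [HF2r HF2e]]]]].
    set (wt := fun r => exist (fun z => 0 <= z <= 1) (F1 r * F2 r) (prod01 _ _ (HF1r r) (HF2r r)) : Ityp).
    assert (Hwt : curves Iunit wt).
    { apply Iunit_curve. simpl. apply smoothRR_sm. apply sm_mult; apply smoothRR_sm; auto. }
    pose proof (proj1 (funs_spec Iunit f) Hfi wt Hwt) as Hs.
    exists (Rmin d1 d2). split. apply Rmin_pos; auto.
    apply sm_ext with (fun r => f (wt r)). apply ball_open.
    intros r Hr. unfold ball in Hr. apply ball_min in Hr. destruct Hr as [Hr1 Hr2]. f_equal.
    apply Ityp_eq. simpl. rewrite (HF1e r Hr1), (HF2e r Hr2). auto.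
    apply sm_sub with allR. intros; exact I. apply smoothRR_sm. exact Hs.
Qed.

Definition Hprod {X Y : Frol} (u1 : X -> BoldI) (u2 : Y -> BoldI)
  (h1 : prodF BoldI X -> X) (h2 : prodF BoldI Y -> Y) (p : prodF BoldI (prodF X Y)) : prodF X Y :=
  (h1 (alphaI u1 u2 (fst p) (fst (snd p)) (snd (snd p)), fst (snd p)),
   h2 (alphaI u2 u1 (fst p) (snd (snd p)) (fst (snd p)), snd (snd p))).

Lemma U_zero {X : Frol} (A : X -> Prop) u h : SNDR_data X A u h -> forall p, Uf u p = 0 <-> A p.
Proof. intros [_ [H _]] p. exact (H p). Qed.

Lemma lam_1 s : 1/2 <= s -> lam s = 1.
Proof. intros; unfold lam; apply St_1; lra. Qed.
Lemma lam_lt1 s : lam s < 1 -> s < 1/2.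
Proof. intros H; unfold lam in H; apply St_lt1_inv in H; lra. Qed.
Lemma rho_1 q : 1/2 <= q -> rho q = 1.
Proof. intros; unfold rho; apply St_1; lra. Qed.
Lemma xi_0 : xi 0 = 0.
Proof. unfold xi; apply St_0; lra. Qed.
Lemma xi_1 : xi 1 = 1.
Proof. unfold xi; apply St_1; lra. Qed.

Lemma hsnd_curve (Z : Frol) (c : R -> prodF BoldI Z) : curves (prodF BoldI Z) c -> curves Z (fun r => snd (c r)).
Proof. apply prod_curve_snd. Qed.

Lemma construct (X Y : Frol) (A : X -> Prop) (B : Y -> Prop) u1 h1 u2 h2 :
  SNDR_data X A u1 h1 -> SNDR_data Y B u2 h2 ->
  SNDR_data (prodF X Y) (fun p : prodF X Y => B (snd p) \/ A (fst p)) (uprodI u1 u2) (Hprod u1 u2 h1 h2) /\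
  ((forall (t : Ityp) x, proj1_sig t = 1 -> A (h1 (t, x))) \/ (forall (t : Ityp) y, proj1_sig t = 1 -> B (h2 (t, y))) ->
   forall (t : Ityp) p, proj1_sig t = 1 -> B (snd (Hprod u1 u2 h1 h2 (t, p))) \/ A (fst (Hprod u1 u2 h1 h2 (t, p)))).
Proof.
  intros D1 D2. pose proof (U_zero A u1 h1 D1) as HA. pose proof (U_zero B u2 h2 D2) as HB.
  destruct D1 as [Hu1 [_ [Hh1s [Hh1f [Hh10 [Hh1A Hh11]]]]]].
  destruct D2 as [Hu2 [_ [Hh2s [Hh2f [Hh20 [Hh2B Hh21]]]]]].
  assert (Hkey : forall x y, 0 < Uf u1 x -> 0 < Uf u2 y ->
     (R1 u1 u2 x y = 1 \/ (R1 u2 u1 y x = 1 /\ lam (Uf u2 y) < lam (Uf u1 x) / 2)) /\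
     (R1 u2 u1 y x = 1 \/ (R1 u1 u2 x y = 1 /\ lam (Uf u1 x) < lam (Uf u2 y) / 2))).
  { intros x y Ha Hb. pose proof (lam_pos _ Ha). pose proof (lam_pos _ Hb).
    unfold R1. destruct (Req_dec_T (Uf u1 x) 0); [lra|]. destruct (Req_dec_T (Uf u2 y) 0); [lra|].
    set (la := lam (Uf u1 x)) in *. set (lb := lam (Uf u2 y)) in *.
    assert (E1 : 1/2 <= lb * / la -> rho (lb * / la) = 1) by apply rho_1.
    assert (E2 : 1/2 <= la * / lb -> rho (la * / lb) = 1) by apply rho_1.
    assert (lb * / la < 1/2 -> lb < la / 2).
    { intros Hq. apply Rmult_lt_compat_r with (r := la) in Hq; auto.
      rewrite Rmult_assoc, Rinv_l in Hq by lra. lra. }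
    assert (la * / lb < 1/2 -> la < lb / 2).
    { intros Hq. apply Rmult_lt_compat_r with (r := lb) in Hq; auto.
      rewrite Rmult_assoc, Rinv_l in Hq by lra. lra. }
    assert (lb < la / 2 -> 1/2 <= la * / lb).
    { intros Hq. apply Rmult_le_reg_r with lb; auto. rewrite Rmult_assoc, Rinv_l by lra. lra. }
    assert (la < lb / 2 -> 1/2 <= lb * / la).
    { intros Hq. apply Rmult_le_reg_r with la; auto. rewrite Rmult_assoc, Rinv_l by lra. lra. }
    destruct (Rlt_dec (lb * / la) (1/2)); destruct (Rlt_dec (la * / lb) (1/2)).
    - exfalso. assert (lb < la / 2) by auto. assert (la < lb/2) by auto. lra.
    - split. right. split. apply E2; lra. auto. left. apply E2; lra.
    - split. left. apply E1; lra. right. split. apply E1; lra. auto.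
    - split; left. apply E1; lra. apply E2; lra. }
  assert (HP : forall (t : Ityp) (p : prodF X Y), B (snd p) \/ A (fst p) -> Hprod u1 u2 h1 h2 (t, p) = p).
  { intros t [x y] Hp. simpl in Hp. unfold Hprod; simpl. destruct Hp as [Hy|Hx].
    - assert (Hb0 : Uf u2 y = 0) by (apply HB; auto). f_equal.
      + destruct (Req_dec_T (Uf u1 x) 0) as [e|n].
        apply Hh1A. apply HA; auto.
        apply Hh10. simpl. unfold R1. destruct Req_dec_T; [contradiction|].
        rewrite Hb0, lam_0. unfold rho. rewrite St_0. ring. lra.
      + apply Hh2B; auto.
    - assert (Ha0 : Uf u1 x = 0) by (apply HA; auto). f_equal.
      + apply Hh1A; auto.
      + destruct (Req_dec_T (Uf u2 y) 0) as [e|n].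
        apply Hh2B. apply HB; auto.
        apply Hh20. simpl. unfold R1. destruct Req_dec_T; [contradiction|].
        rewrite Ha0, lam_0. unfold rho. rewrite St_0. ring. lra. }
  assert (Hcurve : forall (t : R -> Ityp) (c : R -> prodF X Y), curves (prodF X Y) c ->
     (forall r1 d, 0 < d -> ((forall r, Rabs (r - r1) < d -> B (snd (c r)) \/ A (fst (c r))) \/
                             (forall r, Rabs (r - r1) < d -> ~ (B (snd (c r)) \/ A (fst (c r))))) ->
       exists d', 0 < d' /\ sm (ball r1 d') (fun r => xi (proj1_sig (t r)))) ->
     curves (prodF X Y) (fun r => Hprod u1 u2 h1 h2 (t r, c r))).
  { intros t c Hc HT. unfold Hprod; simpl.
    pose proof (prod_curve_fst X Y c Hc) as Hx. pose proof (prod_curve_snd X Y c Hc) as Hy.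
    apply (prod_curve_mk X Y (fun r => h1 (alphaI u1 u2 (t r) (fst (c r)) (snd (c r)), fst (c r)))
                             (fun r => h2 (alphaI u2 u1 (t r) (snd (c r)) (fst (c r)), snd (c r)))).
    - apply (h_curve X Y A B u1 u2 h1 (fun r => fst (c r)) (fun r => snd (c r)) t
               (fun r => B (snd (c r)) \/ A (fst (c r)))); auto.
      intros r; tauto.
    - apply (h_curve Y X B A u2 u1 h2 (fun r => snd (c r)) (fun r => fst (c r)) t
               (fun r => B (snd (c r)) \/ A (fst (c r)))); auto.
      intros r; tauto. }
  split.
  - split.
    {
      intros g Hg. intros c Hc. apply Hg. intros f Hf. exact (uprod_curve X Y u1 u2 c Hu1 Hu2 Hc f Hf). }
    split.
    { intros [x y]. unfold uprodI; simpl. split.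
      - intros H0. apply Rmult_integral in H0. destruct H0 as [H0|H0].
        + right. apply HA. pose proof (Uf_range u1 x). destruct (Req_dec_T (Uf u1 x) 0); auto.
          assert (0 < lam (Uf u1 x)) by (apply lam_pos; lra). lra.
        + left. apply HB. pose proof (Uf_range u2 y). destruct (Req_dec_T (Uf u2 y) 0); auto.
          assert (0 < lam (Uf u2 y)) by (apply lam_pos; lra). lra.
      - intros [Hy|Hx]. apply HB in Hy. rewrite Hy, lam_0. ring. apply HA in Hx. rewrite Hx, lam_0. ring. }
    split.
    {
      intros g Hg. intros c' Hc'. apply Hg.
      pose proof (prod_curve_fst BoldI (prodF X Y) c' Hc') as Ht.
      pose proof (prod_curve_snd BoldI (prodF X Y) c' Hc') as Hc.
      assert (E : (fun r => Hprod u1 u2 h1 h2 (c' r)) = (fun r => Hprod u1 u2 h1 h2 (fst (c' r), snd (c' r)))).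
      { apply functional_extensionality; intro r. destruct (c' r); auto. }
      change (curves (prodF X Y) (fun s => Hprod u1 u2 h1 h2 (c' s))). rewrite E.
      apply Hcurve. exact Hc. intros r1 d Hd Hcc. exact (HT_smooth _ _ Ht r1 d Hd Hcc). }
    split.
    {
      intros g Hg t c Hc Htt.
      pose proof (Hcurve t c Hc (fun r1 d Hd Hcc => HT_fcip (prodF X Y) (fun p : prodF X Y => B (snd p) \/ A (fst p)) c t Htt r1 d Hd Hcc)) as Hcv.
      exact (proj1 (curves_spec (prodF X Y) _) Hcv g Hg). }
    split.
    { intros t [x y] Ht. unfold Hprod; simpl. f_equal.
      apply Hh10. simpl. rewrite Ht, xi_0. ring.
      apply Hh20. simpl. rewrite Ht, xi_0. ring. }
    split.
    { intros t p Hp. apply HP; auto. }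
    { intros t [x y] Ht Hu. simpl in Hu.
      destruct (Req_dec_T (Uf u1 x) 0) as [Ha0|Ha0].
      { rewrite HP. simpl. right. apply HA; auto. simpl. right. apply HA; auto. }
      destruct (Req_dec_T (Uf u2 y) 0) as [Hb0|Hb0].
      { rewrite HP. simpl. left. apply HB; auto. simpl. left. apply HB; auto. }
      pose proof (Uf_range u1 x). pose proof (Uf_range u2 y).
      assert (Ha : 0 < Uf u1 x) by lra. assert (Hb : 0 < Uf u2 y) by lra.
      destruct (Hkey x y Ha Hb) as [K1 K2].
      pose proof (lam_range (Uf u1 x)). pose proof (lam_range (Uf u2 y)).
      assert (Hor : lam (Uf u1 x) < 1 \/ lam (Uf u2 y) < 1).
      { destruct (Rlt_dec (lam (Uf u1 x)) 1); auto. destruct (Rlt_dec (lam (Uf u2 y)) 1); auto.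
        exfalso. assert (lam (Uf u1 x) = 1) by lra. assert (lam (Uf u2 y) = 1) by lra.
        unfold Uf in *. rewrite H3, H4 in Hu. lra. }
      unfold Hprod; simpl.
      assert (Ex : R1 u1 u2 x y = 1 -> Uf u1 x < 1 -> A (h1 (alphaI u1 u2 t x y, x))).
      { intros HR Hl. apply Hh11; auto. simpl. rewrite Ht, xi_1, HR. ring. }
      assert (Ey : R1 u2 u1 y x = 1 -> Uf u2 y < 1 -> B (h2 (alphaI u2 u1 t y x, y))).
      { intros HR Hl. apply Hh21; auto. simpl. rewrite Ht, xi_1, HR. ring. }
      destruct Hor as [Hl|Hl].
      - apply lam_lt1 in Hl. destruct K1 as [K|[K Kl]].
        right. apply Ex; auto; lra.
        left. apply Ey; auto. assert (lam (Uf u2 y) < 1) by lra. apply lam_lt1 in H3. lra.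
      - apply lam_lt1 in Hl. destruct K2 as [K|[K Kl]].
        left. apply Ey; auto; lra.
        right. apply Ex; auto. assert (lam (Uf u1 x) < 1) by lra. apply lam_lt1 in H3. lra. }
  - intros Hsdr t [x y] Ht.
    destruct (Req_dec_T (Uf u1 x) 0) as [Ha0|Ha0].
    { rewrite HP. simpl. right. apply HA; auto. simpl. right. apply HA; auto. }
    destruct (Req_dec_T (Uf u2 y) 0) as [Hb0|Hb0].
    { rewrite HP. simpl. left. apply HB; auto. simpl. left. apply HB; auto. }
    pose proof (Uf_range u1 x). pose proof (Uf_range u2 y).
    assert (Ha : 0 < Uf u1 x) by lra. assert (Hb : 0 < Uf u2 y) by lra.
    destruct (Hkey x y Ha Hb) as [K1 K2].
    pose proof (lam_range (Uf u1 x)). pose proof (lam_range (Uf u2 y)).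
    unfold Hprod; simpl.
    destruct Hsdr as [Sx|Sy].
    + destruct K1 as [K|[K Kl]].
      * right. apply Sx. simpl. rewrite Ht, xi_1, K. ring.
      * left. apply Hh21. simpl. rewrite Ht, xi_1, K. ring.
        assert (Hl3 : lam (Uf u2 y) < 1) by lra. apply lam_lt1 in Hl3. unfold Uf in Hl3. lra.
    + destruct K2 as [K|[K Kl]].
      * left. apply Sy. simpl. rewrite Ht, xi_1, K. ring.
      * right. apply Hh11. simpl. rewrite Ht, xi_1, K. ring.
        assert (Hl3 : lam (Uf u1 x) < 1) by lra. apply lam_lt1 in Hl3. unfold Uf in Hl3. lra.
Qed.

Theorem theorem3 (X Y : Frol) (A : X -> Prop) (B : Y -> Prop) :
  SNDR X A -> SNDR Y B ->
  SNDR (prodF X Y) (fun p : prodF X Y => B (snd p) \/ A (fst p)) /\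
  (SDR X A \/ SDR Y B ->
   SDR (prodF X Y) (fun p : prodF X Y => B (snd p) \/ A (fst p))).
Proof.
  intros [u1 [h1 D1]] [u2 [h2 D2]]. split.
  - exists (uprodI u1 u2), (Hprod u1 u2 h1 h2). apply (construct X Y A B u1 h1 u2 h2 D1 D2).
  - intros [[v1 [k1 [E1 S1]]]|[v2 [k2 [E2 S2]]]].
    + exists (uprodI v1 u2), (Hprod v1 u2 k1 h2).
      destruct (construct X Y A B v1 k1 u2 h2 E1 D2) as [C1 C2]. split; auto.
    + exists (uprodI u1 v2), (Hprod u1 v2 h1 k2).
      destruct (construct X Y A B u1 h1 v2 k2 D1 E2) as [C1 C2]. split; auto.
Qed.
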